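(* Let $H$ be a weak Hopf algebra. The category ${}_H\mathbf{parMod}$ of partial $H$-modules is isomorphic to the category ${}_{{H_{par}^w}}\mathbf{Mod}$ of left modules over ${H_{par}^w}$.
   Context: All algebras are associative and unital over a field $\Bbbk$; Sweedler notation $\Delta(h)=h_1\otimes h_2$. A weak Hopf algebra is $(H,m,u,\Delta,\varepsilon,S)$ with $H$ an algebra, $(H,\Delta,\varepsilon)$ a coalgebra, and for all $g,h,k$: $\Delta(kh)=\Delta(k)\Delta(h)$; $\varepsilon(kh_1)\varepsilon(h_2g)=\varepsilon(khg)=\varepsilon(kh_2)\varepsilon(h_1g)$; $(1\otimes\Delta(1))(\Delta(1)\otimes1)=\Delta^2(1)=(\Delta(1)\otimes1)(1\otimes\Delta(1))$; $h_1S(h_2)=\varepsilon(1_1h)1_2$; $S(h_1)h_2=1_1\varepsilon(h1_2)$; $S(h)=S(h_1)h_2S(h_3)$, where $\Delta(1)=1_1\otimes1_2$. ${H_{par}^w}=T(H)/I$, where $T(H)$ is the tensor algebra of the vector space $H$ and $I$ is the ideal generated by, for all $h,k\in H$: $1_H-1_{T(H)}$; $h\otimes k_1\otimes S(k_2)-hk_1\otimes S(k_2)$; $h\otimes S(k_1)\otimes k_2-hS(k_1)\otimes k_2$; $h_1\otimes S(h_2)\otimes k-h_1\otimes S(h_2)k$; $S(h_1)\otimes h_2\otimes k-S(h_1)\otimes h_2k$; $h-h_1\otimes S(h_2)\otimes h_3$. A partial $H$-module is a vector space $M$ with a linear map $\bullet\colon H\otimes M\to M$ such that for all $m\in M$,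 $h,k\in H$: $1_H\bullet m=m$; $h\bullet(k_1\bullet(S(k_2)\bullet m))=hk_1\bullet(S(k_2)\bullet m)$; $h\bullet(S(k_1)\bullet(k_2\bullet m))=hS(k_1)\bullet(k_2\bullet m)$; $h_1\bullet(S(h_2)\bullet(k\bullet m))=h_1\bullet(S(h_2)k\bullet m)$; $S(h_1)\bullet(h_2\bullet(k\bullet m))=S(h_1)\bullet(h_2k\bullet m)$; $h_1\bullet(S(h_2)\bullet(h_3\bullet m))=h\bullet m$. Morphisms of partial $H$-modules are linear maps $f$ with $f(h\bullet m)=h\bullet f(m)$. *)

(* Defs.v *)
From HB Require Import structures.
From mathcomp Require Import all_boot all_algebra.
From mathcomp.multinomials Require Import monalg.
From Stdlib Require Import ClassicalEpsilon JMeq.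
Set Implicit Arguments. Unset Strict Implicit. Unset Printing Implicit Defensive.
Import GRing.Theory.
Local Open Scope ring_scope.
Local Open Scope quotient_scope.

Definition pbool (P : Prop) : bool :=
  if excluded_middle_informative P then true else false.
Lemma pboolE (P : Prop) : pbool P <-> P.
Proof. by rewrite /pbool; case: excluded_middle_informative. Qed.

Section RingQuot.
Variables (A : pzRingType) (G : A -> Prop).

Definition in_ideal_gen (a : A) : Prop :=
  exists s : seq (A * A * A), (forall t, List.In t s -> G t.1.2) /\
    a = \sum_(t <- s) t.1.1 * t.1.2 * t.2.

Lemma ideal0 : in_ideal_gen 0.
Proof. by exists [::]; split=> //; rewrite big_nil. Qed.
Lemma idealD a b : in_ideal_gen a -> in_ideal_gen b -> in_ideal_gen (a + b).
Proof.
move=> [s [Hs ->]] [s' [Hs' ->]]; exists (s ++ s'); split; last by rewrite big_cat.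
by move=> t Ht; case: (List.in_app_or _ _ _ Ht) => [/Hs|/Hs'].
Qed.
Lemma idealMl r a : in_ideal_gen a -> in_ideal_gen (r * a).
Proof.
move=> [s [Hs ->]]; exists [seq (r * t.1.1, t.1.2, t.2) | t <- s]; split.
  by move=> t Ht; case: (proj1 (List.in_map_iff _ _ _) Ht) => [u [<- /Hs]].
by rewrite big_map mulr_sumr; apply: eq_bigr => t _; rewrite !mulrA.
Qed.
Lemma idealMr r a : in_ideal_gen a -> in_ideal_gen (a * r).
Proof.
move=> [s [Hs ->]]; exists [seq (t.1.1, t.1.2, t.2 * r) | t <- s]; split.
  by move=> t Ht; case: (proj1 (List.in_map_iff _ _ _) Ht) => [u [<- /Hs]].
by rewrite big_map mulr_suml; apply: eq_bigr => t _; rewrite !mulrA.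
Qed.
Lemma idealN a : in_ideal_gen a -> in_ideal_gen (- a).
Proof. by move=> /(idealMl (-1)); rewrite mulN1r. Qed.
Lemma ideal_gen_in g : G g -> in_ideal_gen g.
Proof.
move=> Gg; exists [:: (1, g, 1)]; split; first by move=> t [<-|].
by rewrite big_seq1 mul1r mulr1.
Qed.

Definition quot_rel (x y : A) : bool := pbool (in_ideal_gen (x - y)).
Lemma quot_relE x y : quot_rel x y <-> in_ideal_gen (x - y).
Proof. exact: pboolE. Qed.
Lemma quot_rel_refl : reflexive quot_rel.
Proof. by move=> x; apply/quot_relE; rewrite subrr; apply: ideal0. Qed.
Lemma quot_rel_sym : symmetric quot_rel.
Proof.
suff H x y : quot_rel x y -> quot_rel y x.
  by move=> x y; apply/idP/idP; apply: H.
by move/quot_relE/idealN; rewrite opprB => /quot_relE.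
Qed.
Lemma quot_rel_trans : transitive quot_rel.
Proof.
move=> y x z /quot_relE Hxy /quot_relE Hyz; apply/quot_relE.
by have := idealD Hxy Hyz; rewrite addrA subrK.
Qed.
Definition quot_equiv := EquivRel quot_rel quot_rel_refl quot_rel_sym quot_rel_trans.

Definition quot_ring := {eq_quot quot_equiv}.
HB.instance Definition _ := EqQuotient.on quot_ring.
HB.instance Definition _ := Choice.on quot_ring.

Local Notation pi := (\pi_quot_ring).

Lemma piP x y : in_ideal_gen (x - y) -> pi x = pi y.
Proof. by move=> H; apply/(@eqquotP _ _ quot_ring)/quot_relE. Qed.
Lemma reprP x : in_ideal_gen (repr (pi x) - x).
Proof. apply/quot_relE; apply/(@eqquotP _ _ quot_ring); exact: reprK. Qed.

Lemma qind (P : quot_ring -> Prop) : (forall a, P (pi a)) -> forall x, P x.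
Proof. move=> H x; rewrite -[x]reprK; exact: H. Qed.

Definition qzero : quot_ring := pi 0.
Definition qadd (x y : quot_ring) : quot_ring := pi (repr x + repr y).
Definition qopp (x : quot_ring) : quot_ring := pi (- repr x).
Definition qone : quot_ring := pi 1.
Definition qmul (x y : quot_ring) : quot_ring := pi (repr x * repr y).

Lemma qaddE a b : qadd (pi a) (pi b) = pi (a + b).
Proof.
apply: piP; have := idealD (reprP a) (reprP b).
by rewrite addrACA opprD.
Qed.
Lemma qoppE a : qopp (pi a) = pi (- a).
Proof. by apply: piP; have := idealN (reprP a); rewrite opprB addrC opprK. Qed.
Lemma qmulE a b : qmul (pi a) (pi b) = pi (a * b).
Proof.
apply: piP; set a' := repr (pi a); set b' := repr (pi b).
have -> : a' * b' - a * b = (a' - a) * b' + a * (b' - b).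
  by rewrite mulrBl mulrBr addrA subrK.
exact: idealD (idealMr _ (reprP a)) (idealMl _ (reprP b)).
Qed.

Lemma qaddA : associative qadd.
Proof. by elim/qind=> x; elim/qind=> y; elim/qind=> z; rewrite !qaddE addrA. Qed.
Lemma qaddC : commutative qadd.
Proof. by elim/qind=> x; elim/qind=> y; rewrite !qaddE addrC. Qed.
Lemma qadd0 : left_id qzero qadd.
Proof. by elim/qind=> x; rewrite qaddE add0r. Qed.
Lemma qaddN : left_inverse qzero qopp qadd.
Proof. by elim/qind=> x; rewrite qoppE qaddE addNr. Qed.
HB.instance Definition _ := GRing.isZmodule.Build quot_ring qaddA qaddC qadd0 qaddN.
Lemma qmulA : associative qmul.
Proof. by elim/qind=> x; elim/qind=> y; elim/qind=> z; rewrite !qmulE mulrA. Qed.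
Lemma qmul1 : left_id qone qmul.
Proof. by elim/qind=> x; rewrite qmulE mul1r. Qed.
Lemma qmulr1 : right_id qone qmul.
Proof. by elim/qind=> x; rewrite qmulE mulr1. Qed.
Lemma qmulDl : left_distributive qmul (@GRing.add quot_ring).
Proof.
by elim/qind=> x; elim/qind=> y; elim/qind=> z; rewrite /GRing.add /= !(qmulE, qaddE) mulrDl.
Qed.
Lemma qmulDr : right_distributive qmul (@GRing.add quot_ring).
Proof.
by elim/qind=> x; elim/qind=> y; elim/qind=> z; rewrite /GRing.add /= !(qmulE, qaddE) mulrDr.
Qed.
HB.instance Definition _ := GRing.Zmodule_isPzRing.Build quot_ring qmulA qmul1 qmulr1 qmulDl qmulDr.

End RingQuot.

Record category := Category {
  cat_ob : Type;
  cat_hom : cat_ob -> cat_ob -> Type;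
  cat_id : forall a, cat_hom a a;
  cat_comp : forall a b c, cat_hom b c -> cat_hom a b -> cat_hom a c;
  cat_comp1f : forall a b (f : cat_hom a b), cat_comp (cat_id b) f = f;
  cat_compf1 : forall a b (f : cat_hom a b), cat_comp f (cat_id a) = f;
  cat_compA : forall a b c d (h : cat_hom c d) (g : cat_hom b c) (f : cat_hom a b),
      cat_comp h (cat_comp g f) = cat_comp (cat_comp h g) f
}.
Arguments cat_hom : clear implicits.
Arguments cat_id {_} _.
Arguments cat_comp {_ _ _ _}.

Record functor (C D : category) := Functor {
  fobj : cat_ob C -> cat_ob D;
  fhom : forall a b, cat_hom C a b -> cat_hom D (fobj a) (fobj b);
  fhom_id : forall a, fhom (cat_id a) = cat_id (fobj a);
  fhom_comp : forall a b c (g : cat_hom C b c) (f : cat_hom C a b),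
      fhom (cat_comp g f) = cat_comp (fhom g) (fhom f)
}.
Arguments fobj {C D}.
Arguments fhom {C D} _ {a b}.

Definition cat_isomorphic (C D : category) : Prop :=
  exists (F : functor C D) (G : functor D C),
    [/\ forall a, fobj G (fobj F a) = a,
        forall a b (f : cat_hom C a b), JMeq (fhom G (fhom F f)) f,
        forall b, fobj F (fobj G b) = b &
        forall a b (g : cat_hom D a b), JMeq (fhom F (fhom G g)) g].

Lemma sig_eq_proj1 (A : Type) (P : A -> Prop) (x y : {a : A | P a}) :
  proj1_sig x = proj1_sig y -> x = y.
Proof.
case: x => x px; case: y => y py /= exy; subst y.
by rewrite (Classical_Prop.proof_irrelevance _ px py).
Qed.

(* Sweedler sums.  The comultiplication Delta : H -> H (x) H is encoded  *)
(* by giving, for every h, a finite list of pairs representing an       *)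
(* element sum_i a_i (x) b_i of H (x) H (Sweedler notation h_1 (x) h_2). *)
(* Equalities in H (x) H (resp. H (x) H (x) H) are expressed by testing  *)
(* against all bilinear (resp. trilinear) maps into all K-vector spaces  *)
(* (universal property of the tensor product).                          *)
Section Sweedler.
Variables (T : Type) (D : T -> seq (T * T)).

Definition sw2 (V : nmodType) (h : T) (f : T -> T -> V) : V :=
  \sum_(p <- D h) f p.1 p.2.
Definition sw3 (V : nmodType) (h : T) (f : T -> T -> T -> V) : V :=
  \sum_(p <- D h) \sum_(q <- D p.1) f q.1 q.2 p.2.
End Sweedler.

Definition bilin (K : pzRingType) (H W : lmodType K) (f : H -> H -> W) : Prop :=
  (forall a, linear (f a)) /\ (forall b, linear (fun a => f a b)).
Definition trilin (K : pzRingType) (H W : lmodType K) (f : H -> H -> H -> W) : Prop :=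
  [/\ forall a b, linear (f a b), forall a c, linear (fun b => f a b c) &
      forall b c, linear (fun a => f a b c)].

Record weak_hopf_algebra (K : fieldType) (H : algType K) := WeakHopfAlgebra {
  wh_delta : H -> seq (H * H);
  wh_eps : H -> K;
  wh_S : H -> H;
  wh_delta_linear : forall (W : lmodType K) (f : H -> H -> W), bilin f ->
    linear (fun h => sw2 wh_delta h f);
  wh_coassoc : forall (W : lmodType K) (f : H -> H -> H -> W), trilin f ->
    forall h, sw3 wh_delta h f =
              \sum_(p <- wh_delta h) \sum_(q <- wh_delta p.2) f p.1 q.1 q.2;
  wh_eps_linear : forall (a : K) (x y : H), wh_eps (a *: x + y) = a * wh_eps x + wh_eps y;
  wh_counit_l : forall h, sw2 wh_delta h (fun a b => wh_eps a *: b) = h;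
  wh_counit_r : forall h, sw2 wh_delta h (fun a b => wh_eps b *: a) = h;
  wh_S_linear : linear wh_S;
  (* Delta(kh) = Delta(k) Delta(h) *)
  wh_delta_mul : forall (W : lmodType K) (f : H -> H -> W), bilin f ->
    forall x y, sw2 wh_delta (x * y) f =
      \sum_(p <- wh_delta x) \sum_(q <- wh_delta y) f (p.1 * q.1) (p.2 * q.2);
  (* eps(k h_1) eps(h_2 g) = eps(k h g) = eps(k h_2) eps(h_1 g) *)
  wh_eps_mul_l : forall x y z,
    sw2 wh_delta y (fun a b => wh_eps (x * a) * wh_eps (b * z)) = wh_eps (x * y * z);
  wh_eps_mul_r : forall x y z,
    wh_eps (x * y * z) = sw2 wh_delta y (fun a b => wh_eps (x * b) * wh_eps (a * z));
  (* (1 (x) Delta(1))(Delta(1) (x) 1) = Delta^2(1) = (Delta(1) (x) 1)(1 (x) Delta(1)) *)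
  wh_unit_l : forall (W : lmodType K) (f : H -> H -> H -> W), trilin f ->
    \sum_(p <- wh_delta 1) \sum_(q <- wh_delta 1) f p.1 (q.1 * p.2) q.2
      = sw3 wh_delta 1 f;
  wh_unit_r : forall (W : lmodType K) (f : H -> H -> H -> W), trilin f ->
    sw3 wh_delta 1 f
      = \sum_(p <- wh_delta 1) \sum_(q <- wh_delta 1) f p.1 (p.2 * q.1) q.2;
  (* h_1 S(h_2) = eps(1_1 h) 1_2 *)
  wh_antipode_l : forall h,
    sw2 wh_delta h (fun a b => a * wh_S b) = sw2 wh_delta 1 (fun a b => wh_eps (a * h) *: b);
  (* S(h_1) h_2 = 1_1 eps(h 1_2) *)
  wh_antipode_r : forall h,
    sw2 wh_delta h (fun a b => wh_S a * b) = sw2 wh_delta 1 (fun a b => wh_eps (h * b) *: a);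
  (* S(h) = S(h_1) h_2 S(h_3) *)
  wh_antipode_SSS : forall h,
    wh_S h = sw3 wh_delta h (fun a b c => wh_S a * b * wh_S c)
}.

Section PartialModules.
Variables (K : fieldType) (H : algType K) (WH : weak_hopf_algebra H).
Local Notation D := (wh_delta WH).
Local Notation S := (wh_S WH).

Record parModule := ParModule {
  pm_car :> lmodType K;
  pm_act : H -> pm_car -> pm_car;         (* the linear map H (x) M -> M *)
  pm_act_linear_r : forall h, linear (pm_act h);
  pm_act_linear_l : forall m, linear (fun h => pm_act h m);
  pm_unit : forall m, pm_act 1 m = m;
  pm_ax2 : forall h k m,
    sw2 D k (fun a b => pm_act h (pm_act a (pm_act (S b) m)))
    = sw2 D k (fun a b => pm_act (h * a) (pm_act (S b) m));
  pm_ax3 : forall h k m,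
    sw2 D k (fun a b => pm_act h (pm_act (S a) (pm_act b m)))
    = sw2 D k (fun a b => pm_act (h * S a) (pm_act b m));
  pm_ax4 : forall h k m,
    sw2 D h (fun a b => pm_act a (pm_act (S b) (pm_act k m)))
    = sw2 D h (fun a b => pm_act a (pm_act (S b * k) m));
  pm_ax5 : forall h k m,
    sw2 D h (fun a b => pm_act (S a) (pm_act b (pm_act k m)))
    = sw2 D h (fun a b => pm_act (S a) (pm_act (b * k) m));
  pm_ax6 : forall h m,
    sw3 D h (fun a b c => pm_act a (pm_act (S b) (pm_act c m))) = pm_act h m
}.

Definition parHom (M N : parModule) :=
  {f : M -> N | linear f /\ forall h m, f (@pm_act M h m) = @pm_act N h (f m)}.

Definition parHom_id (M : parModule) : parHom M M.
Proof. by exists id; split. Defined.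

Definition parHom_comp (M N P : parModule) (g : parHom N P) (f : parHom M N) :
  parHom M P.
Proof.
exists (fun x => proj1_sig g (proj1_sig f x)); split.
- by move=> a u v; rewrite (proj1 (proj2_sig f)) (proj1 (proj2_sig g)).
- by move=> h m; rewrite (proj2 (proj2_sig f)) (proj2 (proj2_sig g)).
Defined.

Definition parModCat : category.
Proof.
refine (@Category parModule parHom parHom_id parHom_comp _ _ _);
  by move=> *; apply: sig_eq_proj1.
Defined.

(* H_par^w = T(H) / I.  T(H) is realised as the free K-algebra on the   *)
(* set H (noncommutative polynomials, words in the letters [h], h in H) *)
(* modulo the linearity relations [a+b] = [a]+[b], [c a] = c [a]; thus  *)
(* T(H)/I is the free algebra modulo the ideal generated by the         *)
(* linearity relations together with the generators of I, where a word  *)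
(* [h_1][h_2]...[h_n] stands for h_1 (x) h_2 (x) ... (x) h_n.            *)
Definition freeAlg := {malg K[fmonom H]}.
Definition gen (x : H) : freeAlg := << fmu x >>.

Definition Hpar_rel (x : freeAlg) : Prop :=
  (* linearity of the generators: this realises the tensor algebra T(H) *)
  (exists a b, x = gen (a + b) - gen a - gen b) \/
  (exists (c : K) a, x = gen (c *: a) - c *: gen a) \/
  x = gen 1 - 1 \/
  (exists h k, x = sw2 D k (fun a b =>
                     gen h * gen a * gen (S b) - gen (h * a) * gen (S b))) \/
  (exists h k, x = sw2 D k (fun a b =>
                     gen h * gen (S a) * gen b - gen (h * S a) * gen b)) \/
  (exists h k, x = sw2 D h (fun a b =>
                     gen a * gen (S b) * gen k - gen a * gen (S b * k))) \/
  (exists h k, x = sw2 D h (fun a b =>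
                     gen (S a) * gen b * gen k - gen (S a) * gen (b * k))) \/
  (exists h, x = gen h - sw3 D h (fun a b c => gen a * gen (S b) * gen c)).

Definition Hpar : pzRingType := quot_ring Hpar_rel.

Definition modHom (R : pzRingType) (M N : lmodType R) := {f : M -> N | linear f}.

End PartialModules.

Definition modHom_id (R : pzRingType) (M : lmodType R) : modHom M M.
Proof. by exists id. Defined.
Definition modHom_comp (R : pzRingType) (M N P : lmodType R)
  (g : modHom N P) (f : modHom M N) : modHom M P.
Proof.
exists (fun x => proj1_sig g (proj1_sig f x)).
by move=> a u v; rewrite (proj2_sig f) (proj2_sig g).
Defined.

Definition ModCat (R : pzRingType) : category.
Proof.
refine (@Category (lmodType R) (@modHom R) (@modHom_id R) (@modHom_comp R) _ _ _);
  by move=> *; apply: sig_eq_proj1.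
Defined.

(* Main.v *)
Require Import Defs.
From HB Require Import structures.
From mathcomp Require Import all_boot all_algebra.
From mathcomp Require Import finmap.
From mathcomp.multinomials Require Import monalg.
From Stdlib Require Import JMeq ProofIrrelevance FunctionalExtensionality.
Set Implicit Arguments. Unset Strict Implicit. Unset Printing Implicit Defensive.
Import GRing.Theory.
Local Open Scope ring_scope.
Local Open Scope quotient_scope.

Section Relmod.
Variables (R1 R2 : pzRingType) (M : lmodType R1) (sc : R2 -> M -> M).
Hypotheses (hA : forall a b v, sc a (sc b v) = sc (a*b) v) (h0 : forall v, sc 0 v = 0)
  (h1 : forall v, sc 1 v = v)
  (hDr : forall a u v, sc a (u+v) = sc a u + sc a v)
  (hDl : forall v a b, sc (a+b) v = sc a v + sc b v).
Definition relmod : lmodType R2 :=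
  let c := GRing.Lmodule.class M in
  @GRing.Lmodule.Pack R2 (GRing.Lmodule.sort M)
   (@GRing.Lmodule.Class R2 _
     (GRing.Lmodule.Algebra_hasOpp_mixin c)
     (GRing.Lmodule.Algebra_hasZero_mixin c)
     (GRing.Lmodule.Algebra_hasAdd_mixin c)
     (GRing.Lmodule.Algebra_BaseZmoduleNmodule_isZmodule_mixin c)
     (GRing.Lmodule.Algebra_BaseAddUMagma_isAddUMagma_mixin c)
     (GRing.Lmodule.Algebra_BaseAddMagma_isAddMagma_mixin c)
     (GRing.Lmodule.choice_hasChoice_mixin c)
     (GRing.Lmodule.eqtype_hasDecEq_mixin c)
     (GRing.Lmodule.Algebra_AddMagma_isAddSemigroup_mixin c)
     (@GRing.Nmodule_isLSemiModule.Axioms_ R2 _ _ _ _ _ _ _ _ sc hA h0 h1 hDr hDl)).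
End Relmod.

Lemma relmod_eq (R : pzRingType) (M : lmodType R) sc hA h0 h1 hDr hDl :
  (forall a v, sc a v = a *: v) -> @relmod R R M sc hA h0 h1 hDr hDl = M.
Proof.
move=> E.
have Esc : sc = @GRing.scale R M by apply: functional_extensionality => a; apply: functional_extensionality => v; apply: E.
subst sc. clear E.
case: M hA h0 h1 hDr hDl => T [? ? ? ? ? ? ? ? ? [sc' ? ? ? ? ?]] /= hA h0 h1 hDr hDl.
rewrite /relmod /=.
f_equal; f_equal; f_equal; apply: proof_irrelevance.
Qed.

Lemma relmod_relmod (R0 R1 R2 : pzRingType) (M : lmodType R0) sc hA h0 h1 hDr hDl sc' hA' h0' h1' hDr' hDl' :
  exists hA'' h0'' h1'' hDr'' hDl'', @relmod R1 R2 (@relmod R0 R1 M sc hA h0 h1 hDr hDl) sc' hA' h0' h1' hDr' hDl' = @relmod R0 R2 M sc' hA'' h0'' h1'' hDr'' hDl''.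
Proof. by do 5 eexists. Qed.

Lemma relmod_rr (R0 R1 R2 : pzRingType) (M : lmodType R0) sc hA h0 h1 hDr hDl
  (sc' : R2 -> M -> M) hA' h0' h1' hDr' hDl' :
  @relmod R1 R2 (@relmod R0 R1 M sc hA h0 h1 hDr hDl) sc' hA' h0' h1' hDr' hDl' =
  @relmod R0 R2 M sc' hA' h0' h1' hDr' hDl'.
Proof. by []. Qed.

Section Rho.
Variables (K : fieldType) (H : algType K) (WH : weak_hopf_algebra H) (M : parModule WH).

Definition actw (s : seq H) (m : M) : M := foldr (fun h acc => pm_act h acc) m s.

Lemma actw_lin s a (u v : M) : actw s (a *: u + v) = a *: actw s u + actw s v.
Proof. by elim: s => //= h s ->; rewrite (pm_act_linear_r). Qed.
Lemma actwD s (u v : M) : actw s (u + v) = actw s u + actw s v.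
Proof. by rewrite -[u]scale1r actw_lin !scale1r. Qed.
Lemma actw0 s : actw s 0 = 0.
Proof.
have E := actwD s 0 0; rewrite addr0 in E.
by apply/(addrI (actw s 0)); rewrite addr0 -E.
Qed.
Lemma actwZ s a (u : M) : actw s (a *: u) = a *: actw s u.
Proof. by rewrite -[a *: u]addr0 actw_lin actw0 addr0. Qed.
Lemma actw_sum s (I : Type) (r : seq I) (F : I -> M) :
  actw s (\sum_(i <- r) F i) = \sum_(i <- r) actw s (F i).
Proof. exact: (big_morph _ (actwD s) (actw0 s)). Qed.
Lemma actw_cat s t m : actw (s ++ t) m = actw s (actw t m).
Proof. by rewrite /actw foldr_cat. Qed.

Definition rho (g : freeAlg H) (m : M) : M :=
  \sum_(k <- msupp g) g@_k *: actw k m.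

Lemma rho_ext (d : {fset {fmonom H}}) g m : (msupp g `<=` d)%fset ->
  rho g m = \sum_(k <- d) g@_k *: actw k m.
Proof.
move=> le; rewrite /rho (big_fset_incl _ le) // => x _ /mcoeff_outdom ->.
by rewrite scale0r.
Qed.

Lemma rho0 m : rho 0 m = 0.
Proof. by rewrite /rho msupp0 big_seq_fset0. Qed.
Lemma rhoD g1 g2 m : rho (g1 + g2) m = rho g1 m + rho g2 m.
Proof.
have le1 := fsubsetUl (msupp g1) (msupp g2).
have le2 := fsubsetUr (msupp g1) (msupp g2).
rewrite (rho_ext _ (msuppD_le g1 g2)) (rho_ext _ le1) (rho_ext _ le2) -big_split /=.
by apply: eq_bigr => k _; rewrite mcoeffD scalerDl.
Qed.
Lemma rhoN g m : rho (- g) m = - rho g m.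
Proof.
rewrite /rho msuppN -sumrN; apply: eq_bigr => k _.
by rewrite mcoeffN scaleNr.
Qed.
Lemma rhoB g1 g2 m : rho (g1 - g2) m = rho g1 m - rho g2 m.
Proof. by rewrite rhoD rhoN. Qed.
Lemma rhoZ c g m : rho (c *: g) m = c *: rho g m.
Proof.
rewrite (rho_ext _ (msuppZ_le c g)) /rho scaler_sumr; apply: eq_bigr => k _.
by rewrite mcoeffZ scalerA.
Qed.
Lemma rho_sum (I : Type) (r : seq I) (F : I -> freeAlg H) m :
  rho (\sum_(i <- r) F i) m = \sum_(i <- r) rho (F i) m.
Proof.
elim: r => [|i r IH]; first by rewrite !big_nil rho0.
by rewrite !big_cons rhoD IH.
Qed.
Lemma rhoU c k m : rho << c *g k >> m = c *: actw k m.
Proof. by rewrite (rho_ext _ msuppU_le) big_seq_fset1 mcoeffUU. Qed.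
Lemma rho_gen h m : rho (gen h) m = pm_act h m.
Proof. by rewrite /gen rhoU scale1r fmuE. Qed.
Lemma rho1 m : rho 1 m = m.
Proof. by rewrite -mpolyC1E rhoU scale1r fm1. Qed.
Lemma rhoC c m : rho c%:MP m = c *: m.
Proof. by rewrite rhoU fm1. Qed.
Lemma rho_lin g a u v : rho g (a *: u + v) = a *: rho g u + rho g v.
Proof.
rewrite /rho scaler_sumr -big_split /=; apply: eq_bigr => k _.
by rewrite actw_lin scalerDr !scalerA mulrC.
Qed.
Lemma rho_m0 g : rho g 0 = 0.
Proof. by rewrite /rho big1 // => k _; rewrite actw0 scaler0. Qed.
Lemma rho_mD g u v : rho g (u + v) = rho g u + rho g v.
Proof. by rewrite -[u]scale1r rho_lin !scale1r. Qed.
Lemma rho_msum g (I : Type) (r : seq I) (F : I -> M) :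
  rho g (\sum_(i <- r) F i) = \sum_(i <- r) rho g (F i).
Proof. exact: (big_morph _ (rho_mD g) (rho_m0 g)). Qed.
Lemma rho_mZ g a u : rho g (a *: u) = a *: rho g u.
Proof. by rewrite -[a *: u]addr0 rho_lin rho_m0 addr0. Qed.

Lemma rhoM g1 g2 m : rho (g1 * g2) m = rho g1 (rho g2 m).
Proof.
rewrite malgME rho_sum [rho g1 _]/rho.
apply: eq_bigr => k1 _; rewrite rho_sum [rho g2 m]/rho actw_sum scaler_sumr.
apply: eq_bigr => k2 _; rewrite rhoU fmM actw_cat actwZ scalerA.
by [].
Qed.

Lemma pm_actDl h1 h2 (m : M) : pm_act (h1 + h2) m = pm_act h1 m + pm_act h2 m.
Proof. by have := pm_act_linear_l m 1 h1 h2; rewrite /= !scale1r. Qed.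
Lemma pm_act0l (m : M) : pm_act 0 m = 0.
Proof.
have E := pm_actDl 0 0 m; rewrite addr0 in E.
by apply/(addrI (pm_act 0 m)); rewrite addr0 -E.
Qed.
Lemma pm_actZl c h (m : M) : pm_act (c *: h) m = c *: pm_act h m.
Proof. by have := pm_act_linear_l m c h 0; rewrite /= !addr0 pm_act0l addr0. Qed.

Lemma rho_gen2 x y m : rho (gen x * gen y) m = pm_act x (pm_act y m).
Proof. by rewrite rhoM !rho_gen. Qed.
Lemma rho_gen3 x y z m : rho (gen x * gen y * gen z) m = pm_act x (pm_act y (pm_act z m)).
Proof. by rewrite rhoM rho_gen2 rho_gen. Qed.

Lemma rho_sw2B (k : H) (X Y : H -> H -> freeAlg H) (X' Y' : H -> H -> M) m :
 (forall a b, rho (X a b) m = X' a b) -> (forall a b, rho (Y a b) m = Y' a b) ->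
 rho (sw2 (wh_delta WH) k (fun a b => X a b - Y a b)) m =
   sw2 (wh_delta WH) k X' - sw2 (wh_delta WH) k Y'.
Proof. by move=> EX EY; rewrite /sw2 rho_sum -sumrB; apply: eq_bigr => p _; rewrite rhoB EX EY. Qed.
Lemma rho_sw3 (k : H) (X : H -> H -> H -> freeAlg H) (X' : H -> H -> H -> M) m :
 (forall a b c, rho (X a b c) m = X' a b c) ->
 rho (sw3 (wh_delta WH) k X) m = sw3 (wh_delta WH) k X'.
Proof.
move=> EX; rewrite /sw3 rho_sum; apply: eq_bigr => p _.
by rewrite rho_sum; apply: eq_bigr => q _; rewrite EX.
Qed.

Lemma rho_rel g : Hpar_rel WH g -> forall m, rho g m = 0.
Proof.
case=> [[a [b ->]]|[[c [a ->]]|[->|[[h [k ->]]|[[h [k ->]]|[[h [k ->]]|[[h [k ->]]|[h ->]]]]]]]] m.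
- by rewrite (rhoB (gen (a + b) - gen a)) (rhoB (gen (a + b))) !rho_gen pm_actDl addrAC addrK subrr.
- by rewrite (rhoB (gen (c *: a))) (rhoZ c (gen a)) !rho_gen pm_actZl subrr.
- by rewrite (rhoB (gen 1)) rho_gen rho1 pm_unit subrr.
- rewrite (rho_sw2B _ (fun a b => rho_gen3 h a (wh_S WH b) m) (fun a b => rho_gen2 (h*a) (wh_S WH b) m)).
  by rewrite (@pm_ax2 _ _ _ M h k m) subrr.
- rewrite (rho_sw2B _ (fun a b => rho_gen3 h (wh_S WH a) b m) (fun a b => rho_gen2 (h * wh_S WH a) b m)).
  by rewrite (@pm_ax3 _ _ _ M h k m) subrr.
- rewrite (rho_sw2B _ (fun a b => rho_gen3 a (wh_S WH b) k m) (fun a b => rho_gen2 a (wh_S WH b * k) m)).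
  by rewrite (@pm_ax4 _ _ _ M h k m) subrr.
- rewrite (rho_sw2B _ (fun a b => rho_gen3 (wh_S WH a) b k m) (fun a b => rho_gen2 (wh_S WH a) (b * k) m)).
  by rewrite (@pm_ax5 _ _ _ M h k m) subrr.
- rewrite (rhoB (gen h)) rho_gen (rho_sw3 _ (fun a b c => rho_gen3 a (wh_S WH b) c m)).
  by rewrite (@pm_ax6 _ _ _ M h m) subrr.
Qed.

Lemma rho_ideal a : in_ideal_gen (Hpar_rel WH) a -> forall m, rho a m = 0.
Proof.
move=> [s [Hs ->]] m; elim: s Hs => [|t s IH] Hs; first by rewrite big_nil rho0.
rewrite big_cons rhoD IH; last by move=> u Hu; apply: Hs; right.
by rewrite !rhoM (rho_rel (Hs t (or_introl erefl))) rho_m0 addr0.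
Qed.

Local Notation Qpi := (\pi_(quot_ring (Hpar_rel WH))).
Lemma rho_repr a m : rho (@repr _ (quot_ring (Hpar_rel WH)) (Qpi a)) m = rho a m.
Proof. by apply/eqP; rewrite -subr_eq0 -rhoB rho_ideal //; apply: reprP. Qed.
End Rho.

Section FObj.
Variables (K : fieldType) (H : algType K) (WH : weak_hopf_algebra H).
Local Notation Qpi := (\pi_(quot_ring (Hpar_rel WH))).
Definition qr (x : Hpar WH) : freeAlg H := @repr _ (quot_ring (Hpar_rel WH)) x.
Lemma HparM (x y : Hpar WH) : x * y = Qpi (qr x * qr y). Proof. by []. Qed.
Lemma HparD (x y : Hpar WH) : x + y = Qpi (qr x + qr y). Proof. by []. Qed.
Lemma Hpar0 : (0 : Hpar WH) = Qpi 0. Proof. by []. Qed.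
Lemma Hpar1 : (1 : Hpar WH) = Qpi 1. Proof. by []. Qed.
Lemma qrK (x : Hpar WH) : Qpi (qr x) = x. Proof. exact: reprK. Qed.

Variable M : parModule WH.
Definition scH (x : Hpar WH) (m : M) : M := rho (qr x) m.
Lemma scH_A a b v : scH a (scH b v) = scH (a * b) v.
Proof. by rewrite /scH HparM /qr rho_repr rhoM. Qed.
Lemma scH_0 v : scH 0 v = 0.
Proof. by rewrite /scH Hpar0 /qr rho_repr rho0. Qed.
Lemma scH_1 v : scH 1 v = v.
Proof. by rewrite /scH Hpar1 /qr rho_repr rho1. Qed.
Lemma scH_Dr a u v : scH a (u + v) = scH a u + scH a v.
Proof. exact: rho_mD. Qed.
Lemma scH_Dl v a b : scH (a + b) v = scH a v + scH b v.
Proof. by rewrite /scH HparD /qr rho_repr rhoD. Qed.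
Definition FM : lmodType (Hpar WH) := relmod scH_A scH_0 scH_1 scH_Dr scH_Dl.
End FObj.

Fact QP_key : unit. Proof. exact: tt. Qed.
Fact iotaK_key : unit. Proof. exact: tt. Qed.
Section GObj.
Variables (K : fieldType) (H : algType K) (WH : weak_hopf_algebra H).
Definition Qpi : freeAlg H -> Hpar WH := locked_with QP_key (\pi_(quot_ring (Hpar_rel WH))).
Lemma QpiE : Qpi = \pi_(quot_ring (Hpar_rel WH)).
Proof. by rewrite /Qpi; case: QP_key. Qed.
Local Notation D := (wh_delta WH).
Local Notation S := (wh_S WH).

Lemma QpiM (a b : freeAlg H) : Qpi a * Qpi b = Qpi (a * b) :> Hpar WH.
Proof. rewrite QpiE; exact: qmulE. Qed.
Lemma QpiD (a b : freeAlg H) : Qpi a + Qpi b = Qpi (a + b) :> Hpar WH.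
Proof. rewrite QpiE; exact: qaddE. Qed.
Lemma Qpi0 : Qpi 0 = 0 :> Hpar WH. Proof. by rewrite QpiE. Qed.
Lemma Qpi1 : Qpi 1 = 1 :> Hpar WH. Proof. by rewrite QpiE. Qed.
Lemma Qpi_sum (I : Type) (r : seq I) (F : I -> freeAlg H) :
  Qpi (\sum_(i <- r) F i) = \sum_(i <- r) (Qpi (F i) : Hpar WH).
Proof.
elim: r => [|i r IH]; first by rewrite !big_nil Qpi0.
by rewrite !big_cons -QpiD IH.
Qed.
Lemma Qpi_rel (a b : freeAlg H) : Hpar_rel WH (a - b) -> Qpi a = Qpi b :> Hpar WH.
Proof. by move=> R; rewrite QpiE; apply: Defs.piP; apply: ideal_gen_in. Qed.

Lemma malgC_comm (c : K) (g : freeAlg H) : g * c%:MP = c%:MP * g.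
Proof.
rewrite [g]monalgE mulr_suml mulr_sumr; apply: eq_bigr => k _.
by rewrite !malgM_def !fgmulUU mulm1 mul1m mulrC.
Qed.

Definition iotaK : K -> Hpar WH := locked_with iotaK_key (fun c => Qpi c%:MP).
Lemma iotaKE c : iotaK c = Qpi c%:MP.
Proof. by rewrite /iotaK; case: iotaK_key. Qed.
Lemma iotaKM a b : iotaK (a * b) = iotaK a * iotaK b.
Proof. by rewrite !iotaKE QpiM mpolyCM. Qed.
Lemma iotaK0 : iotaK 0 = 0.
Proof. by rewrite iotaKE malgC0E Qpi0. Qed.
Lemma iotaK1 : iotaK 1 = 1.
Proof. by rewrite iotaKE mpolyC1E Qpi1. Qed.
Lemma iotaKD a b : iotaK (a + b) = iotaK a + iotaK b.
Proof. by rewrite !iotaKE QpiD monalgUD. Qed.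

Lemma genD_pi x y : Qpi (gen (x + y)) = Qpi (gen x) + Qpi (gen y) :> Hpar WH.
Proof.
rewrite QpiD; apply: Qpi_rel; rewrite opprD addrA.
by left; exists x, y.
Qed.
Lemma genZ_pi c x : Qpi (gen (c *: x)) = iotaK c * Qpi (gen x) :> Hpar WH.
Proof.
rewrite iotaKE QpiM mul_malgC; apply: Qpi_rel.
by right; left; exists c, x.
Qed.
Lemma gen1_pi : Qpi (gen 1) = 1 :> Hpar WH.
Proof. by rewrite -Qpi1; apply: Qpi_rel; right; right; left. Qed.

Variable N : lmodType (Hpar WH).
Lemma NscA (x y : Hpar WH) (m : N) : x *: (y *: m) = (x * y) *: m.
Proof. exact: (@scalerA _ N x y m). Qed.
Lemma NscDr (x : Hpar WH) (u v : N) : x *: (u + v) = x *: u + x *: v.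
Proof. exact: (@scalerDr _ N x u v). Qed.
Lemma NscDl (x y : Hpar WH) (m : N) : (x + y) *: m = x *: m + y *: m.
Proof. exact: (@scalerDl _ N m x y). Qed.
Lemma Nsc1 (m : N) : (1 : Hpar WH) *: m = m.
Proof. exact: (@scale1r _ N m). Qed.
Lemma Nsc0 (m : N) : (0 : Hpar WH) *: m = 0.
Proof. exact: (@scale0r _ N m). Qed.
Lemma Nsc_suml (I : Type) (r : seq I) (F : I -> Hpar WH) (m : N) :
  (\sum_(i <- r) F i) *: m = \sum_(i <- r) F i *: m.
Proof. exact: (@scaler_suml _ N m I r xpredT F). Qed.
Definition scK (c : K) (m : N) : N := iotaK c *: m.
Lemma scK_A a b v : scK a (scK b v) = scK (a * b) v.
Proof. by rewrite /scK NscA iotaKM. Qed.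
Lemma scK_0 v : scK 0 v = 0.
Proof. by rewrite /scK iotaK0 Nsc0. Qed.
Lemma scK_1 v : scK 1 v = v.
Proof. by rewrite /scK iotaK1 Nsc1. Qed.
Lemma scK_Dr a u v : scK a (u + v) = scK a u + scK a v.
Proof. by rewrite /scK NscDr. Qed.
Lemma scK_Dl v a b : scK (a + b) v = scK a v + scK b v.
Proof. by rewrite /scK iotaKD NscDl. Qed.
Definition GK : lmodType K := relmod scK_A scK_0 scK_1 scK_Dr scK_Dl.

Definition actN (h : H) (m : N) : N := (Qpi (gen h) : Hpar WH) *: m.
Definition actG (h : H) (m : GK) : GK := actN h m.

Lemma sw2_pi k (X : H -> H -> freeAlg H) (m : N) :
  sw2 D k (fun a b => (Qpi (X a b) : Hpar WH) *: m) = (Qpi (sw2 D k X) : Hpar WH) *: m.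
Proof. by rewrite /sw2 Qpi_sum Nsc_suml. Qed.
Lemma sw3_pi k (X : H -> H -> H -> freeAlg H) (m : N) :
  sw3 D k (fun a b c => (Qpi (X a b c) : Hpar WH) *: m) = (Qpi (sw3 D k X) : Hpar WH) *: m.
Proof.
rewrite /sw3 Qpi_sum Nsc_suml; apply: eq_bigr => p _.
by rewrite Qpi_sum Nsc_suml.
Qed.
Lemma sw2_rel k (X Y : H -> H -> freeAlg H) :
  Hpar_rel WH (sw2 D k (fun a b => X a b - Y a b)) ->
  Qpi (sw2 D k X) = Qpi (sw2 D k Y) :> Hpar WH.
Proof. by move=> R; apply: Qpi_rel; move: R; rewrite /sw2 sumrB. Qed.

Lemma Qsc2 g1 g2 (m : N) : Qpi g1 *: (Qpi g2 *: m) = Qpi (g1 * g2) *: m.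
Proof. by rewrite NscA QpiM. Qed.
Lemma Qsc3 g1 g2 g3 (m : N) : Qpi g1 *: (Qpi g2 *: (Qpi g3 *: m)) = Qpi (g1 * g2 * g3) *: m.
Proof. by rewrite (Qsc2 g2 g3) Qsc2 mulrA. Qed.
Lemma iotaK_comm c g : Qpi g * iotaK c = iotaK c * Qpi g.
Proof. by rewrite iotaKE !QpiM malgC_comm. Qed.
Lemma Nsc_comm (x c : Hpar WH) (u v : N) : x * c = c * x ->
  x *: (c *: u + v) = c *: (x *: u) + x *: v.
Proof. by move=> E; rewrite NscDr !NscA E. Qed.
Lemma act2 x y m : actN x (actN y m) = (Qpi (gen x * gen y) : Hpar WH) *: m.
Proof. exact: Qsc2. Qed.
Lemma act3 x y z m : actN x (actN y (actN z m)) = (Qpi (gen x * gen y * gen z) : Hpar WH) *: m.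
Proof. exact: Qsc3. Qed.

Lemma actG_lin_r h : linear (actG h).
Proof.
move=> a u v.
change (actN h (iotaK a *: u + v) = iotaK a *: actN h u + actN h v).
apply: Nsc_comm; exact: iotaK_comm.
Qed.

Lemma actG_lin_l m : linear (fun h => actG h m).
Proof.
move=> a h1 h2.
change (actN (a *: h1 + h2) m = iotaK a *: actN h1 m + actN h2 m).
rewrite /actN [in LHS]genD_pi [in LHS]genZ_pi.
by rewrite NscDl NscA.
Qed.
Lemma actG_unit m : actG 1 m = m.
Proof. by change (actN 1 m = m); rewrite /actN gen1_pi Nsc1. Qed.

Lemma ax_sw2 k (X Y : H -> H -> freeAlg H) (X' Y' : H -> H -> N) m :
  (forall a b, X' a b = (Qpi (X a b) : Hpar WH) *: m) ->
  (forall a b, Y' a b = (Qpi (Y a b) : Hpar WH) *: m) ->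
  Hpar_rel WH (sw2 D k (fun a b => X a b - Y a b)) ->
  sw2 D k X' = sw2 D k Y'.
Proof.
move=> EX EY R.
have E1 : sw2 D k X' = sw2 D k (fun a b => (Qpi (X a b) : Hpar WH) *: m).
  by apply: eq_bigr => p _; exact: EX.
have E2 : sw2 D k Y' = sw2 D k (fun a b => (Qpi (Y a b) : Hpar WH) *: m).
  by apply: eq_bigr => p _; exact: EY.
by rewrite E1 E2 !sw2_pi (sw2_rel R).
Qed.
Lemma ax_sw3 h (X : H -> H -> H -> freeAlg H) (X' : H -> H -> H -> N) m :
  (forall a b c, X' a b c = (Qpi (X a b c) : Hpar WH) *: m) ->
  Hpar_rel WH (gen h - sw3 D h X) ->
  sw3 D h X' = actN h m.
Proof.
move=> EX R.
have E1 : sw3 D h X' = sw3 D h (fun a b c => (Qpi (X a b c) : Hpar WH) *: m).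
  apply: eq_bigr => p _; apply: eq_bigr => q _; exact: EX.
by rewrite E1 sw3_pi /actN (Qpi_rel R).
Qed.

Lemma actG_ax2 h k m :
    sw2 D k (fun a b => actG h (actG a (actG (S b) m)))
    = sw2 D k (fun a b => actG (h * a) (actG (S b) m)).
Proof.
apply: (ax_sw2 (fun a b => act3 h a (S b) m) (fun a b => act2 (h * a) (S b) m)).
by right; right; right; left; exists h, k.
Qed.
Lemma actG_ax3 h k m :
    sw2 D k (fun a b => actG h (actG (S a) (actG b m)))
    = sw2 D k (fun a b => actG (h * S a) (actG b m)).
Proof.
apply: (ax_sw2 (fun a b => act3 h (S a) b m) (fun a b => act2 (h * S a) b m)).
by right; right; right; right; left; exists h, k.
Qed.
Lemma actG_ax4 h k m :
    sw2 D h (fun a b => actG a (actG (S b) (actG k m)))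
    = sw2 D h (fun a b => actG a (actG (S b * k) m)).
Proof.
apply: (ax_sw2 (fun a b => act3 a (S b) k m) (fun a b => act2 a (S b * k) m)).
by right; right; right; right; right; left; exists h, k.
Qed.
Lemma actG_ax5 h k m :
    sw2 D h (fun a b => actG (S a) (actG b (actG k m)))
    = sw2 D h (fun a b => actG (S a) (actG (b * k) m)).
Proof.
apply: (ax_sw2 (fun a b => act3 (S a) b k m) (fun a b => act2 (S a) (b * k) m)).
by right; right; right; right; right; right; left; exists h, k.
Qed.
Lemma actG_ax6 h m :
    sw3 D h (fun a b c => actG a (actG (S b) (actG c m))) = actG h m.
Proof.
apply: (ax_sw3 (fun a b c => act3 a (S b) c m)).
by right; right; right; right; right; right; right; exists h.
Qed.

Definition GM : parModule WH :=
  @ParModule K H WH GK actG actG_lin_r actG_lin_l actG_unit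
    actG_ax2 actG_ax3 actG_ax4 actG_ax5 actG_ax6.
End GObj.

Section Funct.
Variables (K : fieldType) (H : algType K) (WH : weak_hopf_algebra H).
Local Notation D := (wh_delta WH).
Local Notation S := (wh_S WH).

Section PH.
Variables (A B : parModule WH) (f : parHom A B).
Local Notation phi := (proj1_sig f).
Lemma phiD u v : phi (u + v) = phi u + phi v.
Proof. by have := (proj1 (proj2_sig f)) 1 u v; rewrite !scale1r. Qed.
Lemma phi0 : phi 0 = 0.
Proof.
have E := phiD 0 0; rewrite addr0 in E.
by apply/(addrI (phi 0)); rewrite addr0 -E.
Qed.
Lemma phiZ a u : phi (a *: u) = a *: phi u.
Proof. by have := (proj1 (proj2_sig f)) a u 0; rewrite !addr0 phi0 addr0. Qed.
Lemma phi_sum (I : Type) (r : seq I) (F : I -> A) :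
  phi (\sum_(i <- r) F i) = \sum_(i <- r) phi (F i).
Proof. exact: (big_morph _ phiD phi0). Qed.
Lemma phi_actw s m : phi (actw s m) = actw s (phi m).
Proof. by elim: s => //= h s <-; rewrite (proj2 (proj2_sig f)). Qed.
Lemma phi_rho g m : phi (rho g m) = rho g (phi m).
Proof.
rewrite /rho phi_sum; apply: eq_bigr => k _.
by rewrite phiZ phi_actw.
Qed.
Lemma Fhom_lin : linear (phi : FM A -> FM B).
Proof.
move=> x u v.
change (phi (scH x u + v) = scH x (phi u) + phi v).
by rewrite phiD /scH phi_rho.
Qed.
Definition Fhom : modHom (FM A) (FM B) := exist _ (phi : FM A -> FM B) Fhom_lin.
End PH.

Section MH.
Variables (A B : lmodType (Hpar WH)) (f : modHom A B).
Local Notation phi := (proj1_sig f).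
Lemma psiD u v : phi (u + v) = phi u + phi v.
Proof. by have := (proj2_sig f) 1 u v; rewrite !scale1r. Qed.
Lemma psi0 : phi 0 = 0.
Proof.
have E := psiD 0 0; rewrite addr0 in E.
by apply/(addrI (phi 0)); rewrite addr0 -E.
Qed.
Lemma psiZ a u : phi (a *: u) = a *: phi u.
Proof. by have := (proj2_sig f) a u 0; rewrite !addr0 psi0 addr0. Qed.
Lemma Ghom_prop : linear (phi : GK A -> GK B) /\
  forall h m, (phi : GK A -> GK B) (@pm_act _ _ _ (GM A) h m) = @pm_act _ _ _ (GM B) h (phi m).
Proof.
split.
  move=> a u v; change (phi (iotaK WH a *: u + v) = iotaK WH a *: phi u + phi v).
  exact: (proj2_sig f).
move=> h m; change (phi (actN h m) = actN h (phi m)).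
exact: psiZ.
Qed.
Definition Ghom : parHom (GM A) (GM B) := exist _ (phi : GK A -> GK B) Ghom_prop.
End MH.

Definition Ffun : functor (parModCat WH) (ModCat (Hpar WH)).
Proof.
refine (@Functor (parModCat WH) (ModCat (Hpar WH)) (@FM K H WH)
          (fun a b f => @Fhom a b f) _ _).
- by move=> a; apply: sig_eq_proj1.
- by move=> a b c g f; apply: sig_eq_proj1.
Defined.

Definition Gfun : functor (ModCat (Hpar WH)) (parModCat WH).
Proof.
refine (@Functor (ModCat (Hpar WH)) (parModCat WH) (@GM K H WH)
          (fun a b f => @Ghom a b f) _ _).
- by move=> a; apply: sig_eq_proj1.
- by move=> a b c g f; apply: sig_eq_proj1.
Defined.
End Funct.

Lemma eq_JMeq (T : Type) (x y : T) : x = y -> JMeq x y.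
Proof. by move=> ->. Qed.

Section Round.
Variables (K : fieldType) (H : algType K) (WH : weak_hopf_algebra H).
Local Notation Qpi := (@Qpi K H WH).

Lemma parModule_eq (A B : parModule WH) (e : pm_car A = pm_car B) :
  JMeq (@pm_act _ _ _ A) (@pm_act _ _ _ B) -> A = B.
Proof.
case: A e => cA aA r1 r2 r3 r4 r5 r6 r7 r8; case: B => cB aB s1 s2 s3 s4 s5 s6 s7 s8 /= e.
subst cB => J; have E := JMeq_eq J; subst aB.
by f_equal; apply: proof_irrelevance.
Qed.

Lemma rho_qr_iota (M : parModule WH) a (v : M) : rho (qr (iotaK WH a)) v = a *: v.
Proof. by rewrite iotaKE QpiE /qr rho_repr rhoC. Qed.
Lemma rho_qr_gen (M : parModule WH) h (v : M) : rho (qr (Qpi (gen h))) v = pm_act h v.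
Proof. by rewrite QpiE /qr rho_repr rho_gen. Qed.

Lemma GF (M : parModule WH) : GM (FM M) = M.
Proof.
have e : pm_car (GM (FM M)) = pm_car M.
  rewrite /= /GK /FM relmod_rr.
  apply: relmod_eq => a v; exact: rho_qr_iota.
apply: (parModule_eq e); apply: eq_JMeq.
apply: functional_extensionality => h; apply: functional_extensionality => m.
exact: (@rho_qr_gen M h m).
Qed.

Section FGsec.
Variable N : lmodType (Hpar WH).
Lemma gen_cons h s : gen h * << FMonom s >> = << FMonom (h :: s) >> :> freeAlg H.
Proof.
rewrite /gen malgM_def fgmulUU mulr1; congr (mkmalgU _ _).
by apply: val_inj; rewrite /= fmM fmuE.
Qed.
Lemma mon1 : FMonom [::] = (mone : {fmonom H}).
Proof. by apply: val_inj; rewrite /= fm1. Qed.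
Lemma actw_GN s (m : N) : @actw K H WH (GM N) s m = (Qpi << FMonom s >> : Hpar WH) *: (m : N).
Proof.
elim: s => [|h s IH] /=.
  by rewrite mon1 mpolyC1E Qpi1 Nsc1.
change (actN h (@actw K H WH (GM N) s m) = (Qpi << FMonom (h :: s) >> : Hpar WH) *: (m : N)).
by rewrite IH /actN Qsc2 [in LHS]gen_cons.
Qed.
Lemma scU (c : K) (k : {fmonom H}) (m : N) :
  iotaK WH c *: ((Qpi << k >> : Hpar WH) *: m) = (Qpi << c *g k >> : Hpar WH) *: m.
Proof. by rewrite iotaKE Qsc2 malgM_def fgmulUU mul1m mulr1. Qed.
Lemma rho_GN g (m : N) : @rho K H WH (GM N) g m = (Qpi g : Hpar WH) *: (m : N).
Proof.
rewrite /rho.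
transitivity (\sum_(k <- msupp g) (Qpi << g@_k *g k >> : Hpar WH) *: (m : N)).
  apply: eq_bigr => k _.
  change (iotaK WH (g@_k) *: (@actw K H WH (GM N) k m : N) = (Qpi << g@_k *g k >> : Hpar WH) *: (m : N)).
  have := actw_GN k m; rewrite fmK => ->.
  exact: scU.
by rewrite -Nsc_suml -Qpi_sum -monalgE.
Qed.
Lemma FG : FM (GM N) = N.
Proof.
rewrite /FM /= /GK relmod_rr.
apply: relmod_eq => x m.
change (@rho K H WH (GM N) (qr x) m = x *: m).
by rewrite rho_GN QpiE qrK.
Qed.
End FGsec.
End Round.

Lemma parHom_JMeq (K : fieldType) (H : algType K) (WH : weak_hopf_algebra H)
  (A A' B B' : parModule WH) (eA : A' = A) (eB : B' = B)
  (g : parHom A' B') (f : parHom A B) :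
  JMeq (proj1_sig g) (proj1_sig f) -> JMeq g f.
Proof.
subst A' B' => J; have E := JMeq_eq J.
by rewrite (sig_eq_proj1 E).
Qed.
Lemma modHom_JMeq (R : pzRingType) (A A' B B' : lmodType R) (eA : A' = A) (eB : B' = B)
  (g : modHom A' B') (f : modHom A B) :
  JMeq (proj1_sig g) (proj1_sig f) -> JMeq g f.
Proof.
subst A' B' => J; have E := JMeq_eq J.
by rewrite (sig_eq_proj1 E).
Qed.

Theorem proposition6p6 (K : fieldType) (H : algType K) (WH : weak_hopf_algebra H) :
  cat_isomorphic (parModCat WH) (ModCat (Hpar WH)).
Proof.
exists (Ffun WH), (Gfun WH); split.
- move=> a; exact: GF.
- move=> a b f; apply: (parHom_JMeq (GF a) (GF b)).
  by apply: eq_JMeq.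
- move=> b; exact: FG.
- move=> a b g; apply: (modHom_JMeq (FG a) (FG b)).
  by apply: eq_JMeq.
Qed.
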